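(* Consider the following game over slots $1,\dots,T$ with $N\ge2$ users. The BS chooses a pmf $\mathbf p$ and in every slot, independently, schedules user $i$ with probability $p_i$. The adversary chooses a blocking matrix $\sigma\in\{0,1\}^{N\times T}$, where $\sigma_i(t)=0$ means user $i$ is blocked in slot $t$. Feasibility means $\sum_{i,t}(1-\sigma_i(t))\le\alpha T$ and at most one user is blocked per slot, where $0<\alpha<1$. Ages satisfy $a_i(1)=1$ and $a_i(t+1)=1$ if user $i$ is scheduled and not blocked in slot $t$, and $a_i(t+1)=a_i(t)+1$ otherwise. The payoff is $\Delta^{\mathbf p,\sigma}=\frac1T\sum_{t=1}^T\frac1N\sum_i\mathbb E[a_i(t)]$. Let $\bar{\mathbf p}$ be the uniform pmf ($p_i=\frac1N$). Let $\bar\sigma$ block one arbitrary user exactly in the slots $\frac{(1-\alpha)T}{2}+1,\dots,\frac{(1+\alpha)T}2$ and nothing else. Then, for all sufficiently large $T$ with $\alpha T\in\mathbb Z$ and $(1-\alpha)T$ even, $(\bar{\mathbf p},\bar\sigma)$ is a Stackelberg equilibrium with the BS as leader. That is: - $\bar\sigma$ maximizes $\Delta^{\bar{\mathbf p},\sigma}$ over feasible $\sigma$; and - $\bar{\mathbf p}$ minimizes $\max_{\sigma\text{ feasible}}\Delta^{\mathbf p,\sigma}$ over all pmfs $\mathbf p$. *)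

(* Defs.v *)
From mathcomp Require Import all_boot all_order all_algebra.
From mathcomp Require Import reals.
Set Implicit Arguments. Unset Strict Implicit. Unset Printing Implicit Defensive.
Import Order.TTheory GRing.Theory Num.Theory.
Local Open Scope ring_scope.

(* Slots 1..T are represented by ordinals u : 'I_T (slot u+1).
   A blocking matrix sigma : 'I_N -> 'I_T -> bool, with sigma i u = false
   meaning user i is blocked in slot u+1. *)

(* age s sigma i k = a_i(k+1) : a_i(1) = 1, and
   a_i(t+1) = 1 if i is scheduled and not blocked in slot t, else a_i(t)+1. *)
Fixpoint age (N T : nat) (s : {ffun 'I_T -> 'I_N}) (sigma : 'I_N -> 'I_T -> bool)
    (i : 'I_N) (k : nat) : nat :=
  match k with
  | 0 => 1
  | k'.+1 =>
      if [exists u : 'I_T, [&& val u == k', s u == i & sigma i u]] then 1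
      else (age s sigma i k').+1
  end.

Definition pmf (R : realType) (N : nat) (p : 'I_N -> R) : Prop :=
  (forall i, 0 <= p i) /\ \sum_(i < N) p i = 1.

Definition sched_prob (R : realType) (N T : nat) (p : 'I_N -> R)
    (s : {ffun 'I_T -> 'I_N}) : R :=
  \prod_(u < T) p (s u).

(* E[a_i(u+1)] *)
Definition exp_age (R : realType) (N T : nat) (p : 'I_N -> R)
    (sigma : 'I_N -> 'I_T -> bool) (i : 'I_N) (u : 'I_T) : R :=
  \sum_(s : {ffun 'I_T -> 'I_N}) sched_prob p s * (age s sigma i u)%:R.

Definition payoff (R : realType) (N T : nat) (p : 'I_N -> R)
    (sigma : 'I_N -> 'I_T -> bool) : R :=
  (T%:R)^-1 * \sum_(u < T) ((N%:R)^-1 * \sum_(i < N) exp_age p sigma i u).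

Definition feasible (R : realType) (N T : nat) (alpha : R)
    (sigma : 'I_N -> 'I_T -> bool) : Prop :=
  (\sum_(i < N) \sum_(u < T) ((~~ sigma i u : nat)%:R : R)) <= alpha * T%:R /\
  (forall u : 'I_T, (\sum_(i < N) (~~ sigma i u : nat) <= 1)%N).

Definition unif (R : realType) (N : nat) : 'I_N -> R := fun _ => (N%:R)^-1.

(* sigma_bar: block user j exactly in slots m+1, ..., m+k (1-based), where
   m = (1-alpha)T/2 and k = alpha T; i.e. ordinals u with m <= u < m+k. *)
Definition sigma_bar (N T : nat) (j : 'I_N) (m k : nat) : 'I_N -> 'I_T -> bool :=
  fun i u => ~~ ((i == j) && (m <= val u < m + k)%N).

(* Main.v *)
Require Import Defs.
From mathcomp Require Import all_boot all_order all_algebra.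
From mathcomp Require Import reals.
From mathcomp Require Import ring lra zify.
Set Implicit Arguments. Unset Strict Implicit. Unset Printing Implicit Defensive.
Import Order.TTheory GRing.Theory Num.Theory.
Local Open Scope ring_scope.

Definition rho (c : nat -> bool) (x : nat) : nat := (\sum_(v < x) c v)%N.
Definition beta (c : nat -> bool) (a : nat) : bool := (0 < a)%N && ~~ c a.-1.
Definition dst (s t : nat) : nat := ((s - t) + (t - s))%N.
Definition Qf (R : realType) (f : nat -> R) c n :=
  \sum_(a < n) \sum_(b < n) f (dst (rho c a) (rho c b)).
Definition Gf (R : realType) (f : nat -> R) c n :=
  \sum_(u < n) \sum_(a < u.+1) f (dst (rho c a) (rho c u)).
Definition UU (R : realType) (f : nat -> R) r :=
  \sum_(s < r.+1) \sum_(t < r.+1) f (dst s t).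
Definition wf (R : realType) (f : nat -> R) r x := \sum_(t < r.+1) f (dst x t).
Definition Ef (R : realType) (f : nat -> R) n := \sum_(d < n) f d.

Lemma dstC s t : dst s t = dst t s.
Proof. by rewrite /dst addnC. Qed.

Lemma dst0 s : dst s s = 0%N.
Proof. by rewrite /dst subnn. Qed.

Lemma rhoS c x : rho c x.+1 = (rho c x + c x)%N.
Proof. by rewrite /rho big_ord_recr. Qed.

Lemma rho_mono c x y : (x <= y)%N -> (rho c x <= rho c y)%N.
Proof.
move=> /subnK <-; elim: (y - x)%N => [|d IH] //=.
by rewrite addSn rhoS (leq_trans IH) // leq_addr.
Qed.

Lemma reindex (R : realType) c (g : nat -> R) L :
  \sum_(a < L.+1 | ~~ beta c a) g (rho c a) = \sum_(t < (rho c L).+1) g t.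
Proof.
elim: L => [|L IH].
  by rewrite /beta /rho big_mkcond !big_ord1 /= big_ord0 big_ord1.
rewrite big_mkcond big_ord_recr /= -big_mkcond /= IH rhoS /beta /=.
case: (c L) => /=; last by rewrite addr0 addn0.
by rewrite addn1 [in RHS]big_ord_recr.
Qed.

Lemma count_beta (R : realType) c L :
  \sum_(a < L.+1 | beta c a) (1 : R) = (\sum_(v < L) ~~ c v)%N%:R.
Proof.
elim: L => [|L IH].
  by rewrite big_mkcond !big_ord_recr !big_ord0 /= add0r.
rewrite big_mkcond big_ord_recr /= -big_mkcond /= IH big_ord_recr /= natrD /beta /=.
by case: (c L).
Qed.

Lemma rho_bl c L : (rho c L + \sum_(v < L) ~~ c v)%N = L.
Proof.
elim: L => [|L IH]; first by rewrite /rho !big_ord0.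
rewrite rhoS big_ord_recr /=; move: IH; case: (c L) => /=; lia.
Qed.

Lemma sym_sum (R : realType) (h : nat -> nat -> R) n :
  (forall a b, h a b = h b a) ->
  2 * \sum_(u < n) \sum_(a < u.+1) h a u =
  \sum_(a < n) \sum_(b < n) h a b + \sum_(a < n) h a a.
Proof.
move=> hs; elim: n => [|n IH]; first by rewrite !big_ord0 mulr0 addr0.
rewrite big_ord_recr /= mulrDr IH.
have e1 : \sum_(a < n.+1) \sum_(b < n.+1) h a b = \sum_(a<n)\sum_(b<n) h a b
   + \sum_(a<n) h a n + (\sum_(b<n) h b n + h n n).
  rewrite big_ord_recr /=; congr (_ + _).
    by rewrite -big_split; apply eq_bigr => i _; rewrite big_ord_recr.
  by rewrite big_ord_recr /=; congr (_ + _); apply eq_bigr => i _; rewrite hs.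
rewrite e1 [X in _ = _ + X]big_ord_recr [\sum_(a < n.+1) h a n]big_ord_recr /=.
ring.
Qed.

Lemma Gf_Qf (R : realType) (f : nat -> R) c n :
  2 * Gf f c n = Qf f c n + n%:R * f 0%N.
Proof.
rewrite /Gf /Qf (@sym_sum _ (fun a b => f (dst (rho c a) (rho c b)))); last by move=> a b; rewrite dstC.
congr (_ + _); under eq_bigr do rewrite dst0.
by rewrite sumr_const card_ord mulr_natl.
Qed.

Lemma decomp (R : realType) (f : nat -> R) c L :
  Qf f c L.+1 = UU f (rho c L)
   + 2 * \sum_(a < L.+1 | beta c a) wf f (rho c L) (rho c a)
   + \sum_(a < L.+1 | beta c a) \sum_(b < L.+1 | beta c b) f (dst (rho c a) (rho c b)).
Proof.
set F := fun a b => f (dst (rho c a) (rho c b)).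
have inner : forall a, \sum_(b < L.+1) F a b =
    \sum_(b < L.+1 | beta c b) F a b + wf f (rho c L) (rho c a).
  move=> a; rewrite (bigID (fun i : 'I_L.+1 => beta c i)) /=; congr (_ + _).
  by rewrite /F (reindex c (fun t => f (dst (rho c a) t))).
rewrite /Qf -/F; under eq_bigr do rewrite inner.
rewrite big_split /=.
have hw : \sum_(a < L.+1) wf f (rho c L) (rho c a) =
   \sum_(a < L.+1 | beta c a) wf f (rho c L) (rho c a) + UU f (rho c L).
  rewrite (bigID (fun i : 'I_L.+1 => beta c i)) /=; congr (_ + _).
  by rewrite (reindex c (fun s => wf f (rho c L) s)).
have hb : \sum_(a < L.+1) \sum_(b < L.+1 | beta c b) F a b =
   \sum_(a < L.+1 | beta c a) \sum_(b < L.+1 | beta c b) F a b +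
   \sum_(a < L.+1 | beta c a) wf f (rho c L) (rho c a).
  rewrite (bigID (fun i : 'I_L.+1 => beta c i)) /=; congr (_ + _).
  rewrite exchange_big /=; apply eq_bigr => b _.
  rewrite /F (reindex c (fun t => f (dst t (rho c b)))).
  by apply eq_bigr => t _; rewrite dstC.
rewrite hw hb; ring.
Qed.

Lemma w_top (R : realType) (f : nat -> R) t :
  wf f t t = Ef f t.+1.
Proof.
elim: t => [|t IH]; first by rewrite /wf /Ef !big_ord1.
rewrite /wf big_ord_recl /Ef [in RHS]big_ord_recr /=.
have -> : dst t.+1 0 = t.+1 by rewrite /dst; lia.
rewrite addrC; congr (_ + _).
rewrite -/(Ef f t.+1) -IH /wf; apply eq_bigr => i _; congr (f _).
Qed.

Lemma w_formula (R : realType) (f : nat -> R) t n :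
  wf f (t + n) t = Ef f t.+1 + Ef f n.+1 - f 0%N.
Proof.
elim: n => [|n IH].
  by rewrite addn0 w_top /Ef big_ord1 addrK.
rewrite addnS /wf big_ord_recr /= -/(wf f (t + n) t) IH /Ef [in RHS](big_ord_recr n.+1) /=.
have -> : dst t (t + n).+1 = n.+1 by rewrite /dst; lia.
rewrite -/(Ef f n.+1); ring.
Qed.

Lemma Ef_S (R : realType) (f : nat -> R) n : Ef f n.+1 = Ef f n + f n.
Proof. by rewrite /Ef big_ord_recr. Qed.

Definition nonincr (R : realType) (f : nat -> R) := forall a b, (a <= b)%N -> f b <= f a.

Lemma Ef_concave (R : realType) (f : nat -> R) x a b : nonincr f ->
  (a + b = x + x.+1)%N -> Ef f a + Ef f b <= Ef f x + Ef f x.+1.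
Proof.
move=> hf e.
wlog hab : a b e / (a <= b)%N.
  move=> H; case: (leqP a b) => h; first exact: H.
  rewrite addrC; apply: H; [rewrite addnC // | exact: ltnW].
have hax : (a <= x)%N by lia.
have key : forall d a b, (a + d = x)%N -> (a + b = x + x.+1)%N ->
    Ef f a + Ef f b <= Ef f x + Ef f x.+1.
  elim=> [|d IH] a' b' e1 e2.
    have -> : a' = x by lia.
    by have -> : b' = x.+1 by lia.
  have hb : b' = (b'.-1).+1 by lia.
  rewrite hb Ef_S.
  apply: le_trans (IH a'.+1 b'.-1 _ _); try lia.
  rewrite Ef_S; have := hf a' b'.-1 ltac:(lia); lra.
by apply: (key (x - a)%N) => //; lia.
Qed.

Lemma w_max (R : realType) (f : nat -> R) n t : nonincr f ->
  (t <= n.+1 + n)%N -> wf f (n.+1 + n) t <= wf f (n.+1 + n) n.+1.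
Proof.
move=> hf ht.
have e1 : wf f (n.+1 + n) t = Ef f t.+1 + Ef f (n.+1 + n - t).+1 - f 0%N.
  by rewrite -{1}(subnKC ht) w_formula.
rewrite e1 w_formula lerD2r [X in _ <= X]addrC.
by apply: Ef_concave => //; lia.
Qed.

Lemma bound_c (R : realType) (f : nat -> R) (c : nat -> bool) n k :
  nonincr f -> (forall e, 0 <= f e <= 1) ->
  (\sum_(v < n.+1 + n + k) ~~ c v)%N = k ->
  Qf f c (n.+1 + n + k).+1 <=
    UU f (n.+1 + n) + 2 * (k%:R * wf f (n.+1 + n) n.+1) + k%:R ^+ 2.
Proof.
move=> hf hb hk; set L := (n.+1 + n + k)%N.
have hr : rho c L = (n.+1 + n)%N by have := rho_bl c L; rewrite hk /L; lia.
have hcnt := count_beta R c L; rewrite hk in hcnt.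
rewrite decomp hr; apply: lerD; first apply: lerD => //.
  rewrite ler_pM2l // -hcnt mulr_suml; apply: ler_sum => a ha; rewrite mul1r.
  apply: w_max => //; rewrite -hr; apply: rho_mono; have := ltn_ord a; lia.
rewrite expr2 -{1}hcnt mulr_suml; apply: ler_sum => a ha; rewrite mul1r -hcnt.
by apply: ler_sum => b hb'; case/andP: (hb (dst (rho c a) (rho c b))).
Qed.

Definition cbar (n k : nat) : nat -> bool := fun v => ~~ (n.+1 <= v < n.+1 + k)%N.

Lemma rho_cbar n k x : rho (cbar n k) x = (minn x n.+1 + (x - (n.+1 + k)))%N.
Proof.
elim: x => [|x IH]; first by rewrite /rho big_ord0.
rewrite rhoS IH /cbar; case: (leqP n.+1 x) => h1; case: (ltnP x (n.+1 + k)) => h2 /=; lia.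
Qed.

Lemma bl_cbar n k : (\sum_(v < n.+1 + n + k) ~~ cbar n k v)%N = k.
Proof. have := rho_bl (cbar n k) (n.+1 + n + k); rewrite rho_cbar; lia. Qed.

Lemma cbar_eq (R : realType) (f : nat -> R) n k :
  Qf f (cbar n k) (n.+1 + n + k).+1 =
    UU f (n.+1 + n) + 2 * (k%:R * wf f (n.+1 + n) n.+1) + k%:R ^+ 2 * f 0%N.
Proof.
set L := (n.+1 + n + k)%N.
have hr : rho (cbar n k) L = (n.+1 + n)%N by rewrite rho_cbar /L; lia.
have hcnt := count_beta R (cbar n k) L; rewrite bl_cbar in hcnt.
have hb : forall a : 'I_L.+1, beta (cbar n k) a -> rho (cbar n k) a = n.+1.
  move=> a; rewrite /beta /cbar rho_cbar negbK => /andP [h1 /andP [h2 h3]]; lia.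
rewrite decomp hr.
have -> : \sum_(a < L.+1 | beta (cbar n k) a) wf f (n.+1 + n) (rho (cbar n k) a) =
   k%:R * wf f (n.+1 + n) n.+1.
  by rewrite -hcnt mulr_suml; apply: eq_bigr => a ha; rewrite mul1r hb.
congr (_ + _); rewrite expr2 -{1}hcnt !mulr_suml; apply: eq_bigr => a ha.
rewrite mul1r -hcnt mulr_suml; apply: eq_bigr => b hb'.
by rewrite mul1r !hb // dst0.
Qed.

Lemma Qf_true (R : realType) (f : nat -> R) L :
  Qf f (fun _ => true) L.+1 = UU f L.
Proof.
have hr : forall x, rho (fun _ => true) x = x.
  by move=> x; rewrite /rho sum_nat_const card_ord muln1.
by rewrite /Qf /UU; apply: eq_bigr => a _; apply: eq_bigr => b _; rewrite !hr.
Qed.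

Lemma UU_S (R : realType) (f : nat -> R) r :
  UU f r.+1 = UU f r + 2 * (Ef f r.+2 - f 0%N) + f 0%N.
Proof.
rewrite -w_top /UU /wf.
rewrite big_ord_recr /=.
have e1 : \sum_(i < r.+1) \sum_(t < r.+2) f (dst i t) =
   \sum_(i < r.+1) \sum_(t < r.+1) f (dst i t) + \sum_(t < r.+1) f (dst r.+1 t).
  rewrite -big_split /=; apply: eq_bigr => i _; rewrite big_ord_recr /= dstC //.
rewrite e1 [X in _ = _ + 2 * (X - _) + _]big_ord_recr [X in _ + _ + X = _]big_ord_recr /= dst0; ring.
Qed.

Lemma Ef_mono (R : realType) (f : nat -> R) a b : (forall e, 0 <= f e) ->
  (a <= b)%N -> Ef f a <= Ef f b.
Proof.
move=> hf /subnK <-; elim: (b - a)%N => [|d IH] //=.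
by rewrite addSn Ef_S (le_trans IH) // lerDl.
Qed.

Lemma comb3 (R : realType) (f : nat -> R) n k :
  (forall e, 0 <= f e) -> f 0%N = 0 ->
  Ef f (n.+1 + n + k).+1 <= Ef f n.+2 + Ef f n.+1 ->
  Qf f (fun _ => true) (n.+1 + n + k).+1 <= Qf f (cbar n k) (n.+1 + n + k).+1.
Proof.
move=> hf h0 hE.
rewrite Qf_true cbar_eq h0 mulr0 addr0.
have hw : wf f (n.+1 + n) n.+1 = Ef f n.+2 + Ef f n.+1.
  by rewrite w_formula h0 subr0.
rewrite hw.
have : forall j, (j <= k)%N ->
  UU f (n.+1 + n + j) <= UU f (n.+1 + n) + 2 * (j%:R * (Ef f n.+2 + Ef f n.+1)).
  elim=> [|j IH] hj; first by rewrite addn0 mul0r mulr0 addr0.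
  rewrite addnS UU_S h0 !subr0 addr0.
  have hh : Ef f (n.+1 + n + j).+2 <= Ef f n.+2 + Ef f n.+1.
    by apply: le_trans hE; apply: Ef_mono => //; lia.
  have := IH (ltnW hj); rewrite -nat1r; nra.
by apply.
Qed.

Definition ext (T : nat) (g : 'I_T -> bool) (v : nat) : bool :=
  oapp g true (insub v : option 'I_T).

Lemma ext_val T (g : 'I_T -> bool) (u : 'I_T) : ext g u = g u.
Proof. by rewrite /ext valK. Qed.

Lemma ext_out T (g : 'I_T -> bool) v : (T <= v)%N -> ext g v = true.
Proof. by move=> h; rewrite /ext insubN // -leqNgt. Qed.

Lemma conv_big (R : Type) (idx : R) (op : Monoid.law idx) (F : nat -> R) a u T :
  (u <= T)%N ->
  \big[op/idx]_(a <= v < u) F v = \big[op/idx]_(w < T) (if (a <= w < u)%N then F w else idx).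
Proof.
move=> huT; rewrite big_geq_mkord (big_ord_widen_cond _ _ _ huT) big_mkcond.
apply: eq_bigr => w _; rewrite /=.
by case: (a <= w)%N; case: (w < u)%N.
Qed.

Lemma window_cnt (c : nat -> bool) a u : (a <= u)%N ->
  (\sum_(a <= v < u) c v)%N = dst (rho c a) (rho c u).
Proof.
move=> hau; rewrite /dst /rho -!(big_mkord xpredT (fun v => nat_of_bool (c v))) (@big_cat_nat _ _ _ a 0 u) //=.
rewrite /dst; lia.
Qed.

Lemma window_tot (c : nat -> bool) a u :
  (\sum_(a <= v < u) c v + \sum_(a <= v < u) ~~ c v)%N = (u - a)%N.
Proof.
rewrite -big_split /=.
under eq_bigr do rewrite addnC addn_negb.
by rewrite sum_nat_const_nat muln1.
Qed.

Lemma age_sum (N T : nat) (s : {ffun 'I_T -> 'I_N}) sigma i k :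
  age s sigma i k = (\sum_(a < k.+1) \prod_(a <= v < k)
     ~~ [exists u : 'I_T, [&& val u == v, s u == i & sigma i u]])%N.
Proof.
elim: k => [|k IH]; first by rewrite big_ord1 big_geq.
rewrite /= IH [in RHS]big_ord_recr /= big_geq //.
set G := fun v => ~~ [exists u : 'I_T, [&& val u == v, s u == i & sigma i u]].
have -> : (\sum_(a < k.+1) \prod_(a <= v < k.+1) G v =
   (\sum_(a < k.+1) \prod_(a <= v < k) G v) * G k)%N.
  rewrite big_distrl; apply: eq_bigr => a _; rewrite big_nat_recr //.
  exact: leq_ord a.
rewrite /G /=; case: ([exists u, _]) => /=; first by rewrite muln0.
by rewrite muln1 addn1.
Qed.


Lemma ok_eq (N T : nat) (s : {ffun 'I_T -> 'I_N}) (sigma : 'I_N -> 'I_T -> bool) i (w : 'I_T) :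
  [exists u : 'I_T, [&& val u == val w, s u == i & sigma i u]] = (s w == i) && sigma i w.
Proof.
apply/existsP/andP.
  by case=> u' /and3P [/eqP /val_inj -> h1 h2].
by case=> h1 h2; exists w; rewrite eqxx h1 h2.
Qed.

Lemma exp_age_eq (R : realType) N T (p : 'I_N -> R) sigma i (u : 'I_T) :
  \sum_j p j = 1 ->
  exp_age p sigma i u =
    \sum_(a < u.+1) (1 - p i) ^+ dst (rho (ext (sigma i)) a) (rho (ext (sigma i)) u).
Proof.
move=> hsum; rewrite /exp_age.
under eq_bigr => s _ do rewrite age_sum natr_sum mulr_sumr.
rewrite exchange_big /=; apply: eq_bigr => a _.
have huT : (u <= T)%N by exact: ltnW (ltn_ord u).
have hau : (a <= u)%N by exact: leq_ord a.
set G := fun (w : 'I_T) (j : 'I_N) =>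
  p j * (if (a <= w < u)%N then ((~~ ((j == i) && sigma i w)) : nat)%:R else 1).
have h1 : forall s : {ffun 'I_T -> 'I_N},
   sched_prob p s * (\prod_(a <= v < u)
     ~~ [exists u0 : 'I_T, [&& val u0 == v, s u0 == i & sigma i u0]])%N%:R
   = \prod_(w : 'I_T) G w (s w).
  move=> s; rewrite natr_prod (@conv_big _ _ _ _ _ _ T huT) /sched_prob -big_split /=.
  apply: eq_bigr => w _; rewrite /G ok_eq.
  by case: (a <= w < u)%N.
under eq_bigr do rewrite h1.
rewrite -bigA_distr_bigA /=.
have h2 : forall w : 'I_T, \sum_j G w j = (1 - p i) ^+ ((a <= w < u)%N && sigma i w).
  move=> w; rewrite /G; case: (a <= w < u)%N => /=; last first.
    by under eq_bigr do rewrite mulr1; rewrite hsum expr0.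
  case: (sigma i w) => /=; last first.
    by under eq_bigr do rewrite andbF mulr1; rewrite hsum expr0.
  rewrite expr1 (bigD1 i) //= eqxx mulr0 add0r.
  have := hsum; rewrite (bigD1 i) //= => hs.
  have e : 1 - p i = \sum_(j < N | j != i) p j by rewrite -hs; ring.
  by rewrite e; apply: eq_bigr => j hj; rewrite andbT hj mulr1.
under eq_bigr do rewrite h2.
rewrite prodrXr; congr (_ ^+ _).
rewrite -window_cnt // (@conv_big _ _ _ _ _ _ T huT); apply: eq_bigr => w _.
by rewrite ext_val; case: (a <= w < u)%N.
Qed.

Lemma payoff_eq (R : realType) N T (p : 'I_N -> R) (sigma : 'I_N -> 'I_T -> bool) : \sum_j p j = 1 ->
  payoff p sigma =
  T%:R^-1 * (N%:R^-1 * \sum_(i < N) Gf (fun e => (1 - p i) ^+ e) (ext (sigma i)) T).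
Proof.
move=> hs; rewrite /payoff; congr (_ * _); rewrite -mulr_sumr; congr (_ * _).
rewrite exchange_big; apply: eq_bigr => i _; rewrite /Gf; apply: eq_bigr => u _.
by rewrite exp_age_eq.
Qed.

Lemma two_merge (R : realType) (y : R) n a b : 0 <= y <= 1 -> (a + b <= n)%N ->
  y ^+ (n - a) + y ^+ (n - b) <= y ^+ n + y ^+ (n - (a + b)).
Proof.
move=> /andP [y0 y1] hab.
have e1 : (n - a = (n - (a + b)) + b)%N by lia.
have e2 : (n - b = (n - (a + b)) + a)%N by lia.
have e3 : (n = (n - (a + b)) + a + b)%N by lia.
have E1 : y ^+ (n - a) = y ^+ (n - (a + b)) * y ^+ b by rewrite -exprD -e1.
have E2 : y ^+ (n - b) = y ^+ (n - (a + b)) * y ^+ a by rewrite -exprD -e2.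
have E3 : y ^+ n = y ^+ (n - (a + b)) * y ^+ a * y ^+ b by rewrite -!exprD -e3.
rewrite E1 E2 E3.
have hz : 0 <= y ^+ (n - (a + b)) by exact: exprn_ge0.
have ha1 : y ^+ a <= 1 by exact: exprn_ile1.
have hb1 : y ^+ b <= 1 by exact: exprn_ile1.
have ha2 : 0 <= 1 - y ^+ a by rewrite subr_ge0.
have hb2 : 0 <= 1 - y ^+ b by rewrite subr_ge0.
have := mulr_ge0 (mulr_ge0 hz ha2) hb2.
set z := y ^+ (n - (a + b)); set A := y ^+ a; set B := y ^+ b.
move=> h; nra.
Qed.

Lemma merge_seq (R : realType) (I : Type) (s : seq I) (x : I -> nat) (y : R) n :
  0 <= y <= 1 -> (\sum_(i <- s) x i <= n)%N ->
  \sum_(i <- s) y ^+ (n - x i) + y ^+ n <=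
  (\sum_(i <- s) (1 : R)) * y ^+ n + y ^+ (n - \sum_(i <- s) x i).
Proof.
move=> hy; elim: s => [|i s IH] hx.
  by rewrite !big_nil mul0r !add0r subn0.
rewrite !big_cons in hx *.
have hx' : (\sum_(j <- s) x j <= n)%N by lia.
have := IH hx'.
have := two_merge hy hx.
nra.
Qed.

Definition call N T (sigma : 'I_N -> 'I_T -> bool) : nat -> bool :=
  fun v => [forall i, ext (sigma i) v].

Lemma slot_id N T (sigma : 'I_N -> 'I_T -> bool) v :
  (forall u : 'I_T, (\sum_i ~~ sigma i u <= 1)%N) ->
  ((~~ call sigma v) : nat) = (\sum_(i < N) ~~ ext (sigma i) v)%N.
Proof.
move=> hs; case: (ltnP v T) => hv; last first.
  rewrite /call; under eq_bigr do rewrite ext_out //.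
  rewrite big1 //; have -> : [forall i, ext (sigma i) v] by apply/forallP => i; rewrite ext_out.
  by [].
pose w := Ordinal hv.
have e : forall i, ext (sigma i) v = sigma i w by move=> i; rewrite -[v]/(val w) ext_val.
rewrite /call; case: (boolP [forall i, ext (sigma i) v]) => h /=.
  by rewrite big1 // => i _; rewrite (forallP h).
move/forallPn: h => [i0 hi0].
have h1 := hs w.
have h2 : (\sum_(i < N) ~~ ext (sigma i) v)%N = (\sum_i ~~ sigma i w)%N.
  by apply: eq_bigr => i _; rewrite e.
rewrite h2.
have h3 : (1 <= \sum_i ~~ sigma i w)%N by rewrite (bigD1 i0) //= -e (negbTE hi0).
lia.
Qed.

Lemma rho_true x : rho (fun _ => true) x = x.
Proof. by rewrite /rho sum_nat_const card_ord muln1. Qed.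

Lemma merge_Gf (R : realType) N T (sigma : 'I_N -> 'I_T -> bool) (y : R) :
  0 <= y <= 1 -> (forall u : 'I_T, (\sum_i ~~ sigma i u <= 1)%N) ->
  \sum_(i < N) Gf (fun e => y ^+ e) (ext (sigma i)) T + Gf (fun e => y ^+ e) (fun _ => true) T
  <= N%:R * Gf (fun e => y ^+ e) (fun _ => true) T + Gf (fun e => y ^+ e) (call sigma) T.
Proof.
move=> hy hs; rewrite /Gf exchange_big /=.
under eq_bigr do rewrite exchange_big /=.
rewrite mulr_sumr; under [X in _ <= X + _]eq_bigr do rewrite mulr_sumr.
rewrite -big_split -[X in _ <= X]big_split /=; apply: ler_sum => u _.
rewrite -big_split -[X in _ <= X]big_split /=; apply: ler_sum => a _.
have hau : (a <= u)%N by exact: leq_ord a.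
set x := fun i : 'I_N => (\sum_(a <= v < u) ~~ ext (sigma i) v)%N.
have hi : forall i, dst (rho (ext (sigma i)) a) (rho (ext (sigma i)) u) = (u - a - x i)%N.
  move=> i; rewrite -window_cnt // /x; have := window_tot (ext (sigma i)) a u; lia.
have hall : (\sum_(a <= v < u) ~~ call sigma v)%N = (\sum_(i < N) x i)%N.
  rewrite /x exchange_big /=; apply: eq_bigr => v _; exact: slot_id.
have hc : dst (rho (call sigma) a) (rho (call sigma) u) = (u - a - \sum_(i < N) x i)%N.
  rewrite -window_cnt // -hall; have := window_tot (call sigma) a u; lia.
have ht : dst (rho (fun _ => true) a) (rho (fun _ => true) u) = (u - a)%N.
  by rewrite !rho_true /dst; lia.
under eq_bigr do rewrite hi.
rewrite hc ht.
have hle : (\sum_(i < N) x i <= u - a)%N.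
  by rewrite -hall; have := window_tot (call sigma) a u; lia.
have := merge_seq hy hle.
by rewrite sumr_const card_ord.
Qed.

Lemma Gf_ext (R : realType) (f : nat -> R) (c c' : nat -> bool) n :
  (forall v, c v = c' v) -> Gf f c n = Gf f c' n.
Proof.
move=> h; have hr : forall x, rho c x = rho c' x.
  by move=> x; rewrite /rho; apply: eq_bigr => v _; rewrite h.
by rewrite /Gf; apply: eq_bigr => u _; apply: eq_bigr => a _; rewrite !hr.
Qed.

Lemma Gf_mono (R : realType) (y : R) (c c' : nat -> bool) n :
  0 <= y <= 1 -> (forall v, c' v -> c v) ->
  Gf (fun e => y ^+ e) c n <= Gf (fun e => y ^+ e) c' n.
Proof.
move=> /andP [y0 y1] h; rewrite /Gf; apply: ler_sum => u _; apply: ler_sum => a _.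
have hau : (a <= u)%N by exact: leq_ord a.
apply: ler_wiXn2l => //; rewrite -!window_cnt //; apply: leq_sum => v _.
by case: (c' v) (h v) => // ->.
Qed.

Lemma extend (c : nat -> bool) L k : (\sum_(v < L) ~~ c v <= k <= L)%N ->
  exists c' : nat -> bool, (forall v, c' v -> c v) /\ (\sum_(v < L) ~~ c' v)%N = k.
Proof.
move=> /andP [h1 h2].
suff H : forall j, (\sum_(v < L) ~~ c v + j <= L)%N ->
  exists c' : nat -> bool, (forall v, c' v -> c v) /\
    (\sum_(v < L) ~~ c' v)%N = (\sum_(v < L) ~~ c v + j)%N.
  have [c' [hc' e]] := H (k - \sum_(v < L) ~~ c v)%N ltac:(lia).
  by exists c'; split => //; rewrite e; lia.
elim=> [|j IH] hj; first by exists c; rewrite addn0.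
have [c0 [hc0 e0]] := IH ltac:(lia).
case: (boolP [exists v : 'I_L, c0 v]) => [/existsP [v hv] | /existsPn hn]; last first.
  exfalso; have := rho_bl c0 L; rewrite /rho big1 ?e0; first by rewrite add0n => h; move: hj; rewrite addnS h ltnn.
  by move=> i _; rewrite (negbTE (hn i)).
exists (fun x => c0 x && (x != val v)); split.
  by move=> x /andP [] /hc0.
rewrite (bigD1 v) //= eqxx andbF /= add1n addnS -e0 [in RHS](bigD1 v) //= hv add0n.
by congr _.+1; apply: eq_bigr => i hi; rewrite hi andbT.
Qed.

Lemma ext_true T (g : 'I_T -> bool) v : (forall u, g u) -> ext g v.
Proof. by move=> h; rewrite /ext; case: insub. Qed.

Lemma q_bounds (R : realType) N : (0 < N)%N -> 0 <= 1 - N%:R^-1 :> R /\ 1 - N%:R^-1 <= 1 :> R.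
Proof.
move=> hN; have h0 : 0 < N%:R :> R by rewrite ltr0n.
have h1 : N%:R^-1 <= 1 :> R by rewrite invf_le1 // ler1n.
have h2 : 0 <= N%:R^-1 :> R by rewrite invr_ge0 ltW.
split; lra.
Qed.

Lemma sbar_sum (R : realType) (f : nat -> R) N T n k (j : 'I_N) :
  T = (n.+1 + n + k).+1 ->
  \sum_(i < N) Gf f (ext (@sigma_bar N T j n.+1 k i)) T + Gf f (fun _ => true) T =
  N%:R * Gf f (fun _ => true) T + Gf f (cbar n k) T.
Proof.
move=> eT.
have hj : Gf f (ext (@sigma_bar N T j n.+1 k j)) T = Gf f (cbar n k) T.
  apply: Gf_ext => v; rewrite /ext; case: insubP => [u hu <- | hu] /=.
    by rewrite /sigma_bar /cbar eqxx.
  rewrite /cbar (_ : (v < n.+1 + k)%N = false) ?andbF //.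
  by apply/negbTE; rewrite -leqNgt; move: hu; rewrite -leqNgt eT; lia.
have ho : forall i, i != j -> Gf f (ext (@sigma_bar N T j n.+1 k i)) T = Gf f (fun _ => true) T.
  move=> i hi; apply: Gf_ext => v; apply: ext_true => u.
  by rewrite /sigma_bar (negbTE hi).
have eN : N%:R * Gf f (fun _ => true) T = \sum_(i < N) Gf f (fun _ => true) T.
  by rewrite sumr_const card_ord mulr_natl.
rewrite eN (bigD1 j) //= [in RHS](bigD1 j) //= hj.
rewrite (eq_bigr (fun _ => Gf f (fun _ => true) T)); last by move=> i hi; rewrite ho.
ring.
Qed.

Lemma part2_core (R : realType) N T n k (sigma : 'I_N -> 'I_T -> bool) (j : 'I_N) :
  (1 < N)%N -> T = (n.+1 + n + k).+1 ->
  (\sum_(i < N) \sum_(u < T) ~~ sigma i u <= k)%N ->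
  (forall u : 'I_T, (\sum_i ~~ sigma i u <= 1)%N) ->
  \sum_(i < N) Gf (fun e => (1 - N%:R^-1 : R) ^+ e) (ext (sigma i)) T <=
  \sum_(i < N) Gf (fun e => (1 - N%:R^-1 : R) ^+ e) (ext (@sigma_bar N T j n.+1 k i)) T.
Proof.
move=> hN eT htot hs.
have [hq0 hq1] := q_bounds R (ltnW hN).
set q := 1 - N%:R^-1 : R.
have hq : 0 <= q <= 1 by rewrite hq0 hq1.
have M := merge_Gf hq hs.
have S := sbar_sum (fun e => q ^+ e) j eT.
set L := (n.+1 + n + k)%N.
have hbl : (\sum_(v < L) ~~ call sigma v <= k)%N.
  apply: (leq_trans _ htot).
  under eq_bigr do rewrite slot_id //.
  rewrite exchange_big /=; apply: leq_sum => i _.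
  move: (sigma i); rewrite eT => g.
  rewrite [X in (_ <= X)%N]big_ord_recr; apply: (leq_trans _ (leq_addr _ _)).
  by apply: leq_sum => v _; rewrite -(ext_val g (widen_ord _ v)).
have [c' [hc' hc'k]] := @extend (call sigma) L k ltac:(rewrite hbl /L; lia).
have G1 := Gf_mono T hq hc'.
have hni : nonincr (fun e => q ^+ e) by move=> a b hab; exact: ler_wiXn2l.
have hf01 : forall e, 0 <= q ^+ e <= 1 by move=> e; rewrite exprn_ge0 // exprn_ile1.
have hb := bound_c hni hf01 hc'k.
have he := cbar_eq (fun e => q ^+ e) n k.
have h2 := Gf_Qf (fun e => q ^+ e) c' T.
have h3 := Gf_Qf (fun e => q ^+ e) (cbar n k) T.
rewrite eT -/L in h2 h3; rewrite -/L in hb he.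
rewrite expr0 in h2 h3 he.
move: M S G1 hb he h2 h3; rewrite -eT.
set A := \sum_(i < N) _; set B := \sum_(i < N) _.
move=> M S G1 hb he h2 h3.
nra.
Qed.

Definition fd (R : realType) (q : R) (e : nat) : R := e%:R * q ^+ e.-1.

Lemma tangent (R : realType) (y q : R) e : 0 <= y -> 0 <= q ->
  q ^+ e + (y - q) * fd q e <= y ^+ e.
Proof.
move=> hy hq; rewrite /fd; elim: e => [|e IH] /=; first by rewrite mul0r mulr0 addr0.
case: e IH => [|e] IH; first by rewrite !expr1 expr0 mulr1; lra.
rewrite /= in IH *.
rewrite !exprS in IH *.
set Q := q ^+ e in IH *; set Y := y ^+ e in IH *.
have hQ : 0 <= Q by exact: exprn_ge0.
have h1 : 0 <= y * (y * Y - (q * Q + (y - q) * ((e.+1)%:R * Q))).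
  by apply: mulr_ge0 => //; rewrite subr_ge0.
have h2 : 0 <= (e.+1)%:R * Q * ((y - q) * (y - q)).
  by apply: mulr_ge0; [apply: mulr_ge0 | rewrite -expr2 sqr_ge0].
rewrite -[(e.+2)%:R]natr1.
nra.
Qed.

Lemma fd_ge0 (R : realType) (q : R) e : 0 <= q -> 0 <= fd q e.
Proof. by move=> hq; rewrite /fd mulr_ge0 // exprn_ge0. Qed.

Definition Fb (R : realType) (N : nat) (d : nat) : R :=
  (1 - N%:R^-1) ^+ d * (d%:R * N%:R + N%:R ^+ 2).

Lemma Fb_tel (R : realType) N d : (0 < N)%N ->
  Fb R N d - Fb R N d.+1 = fd (1 - N%:R^-1) d.+1.
Proof.
move=> hN; have hN0 : N%:R != 0 :> R by rewrite pnatr_eq0 -lt0n.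
rewrite /Fb /fd /= -natr1.
have -> : (1 - N%:R^-1) ^+ d.+1 = (1 - N%:R^-1) * (1 - N%:R^-1) ^+ d :> R by rewrite exprS.
move: ((1 - N%:R^-1) ^+ d) => Q.
by field.
Qed.

Lemma Ef_tel (R : realType) N n j : (0 < N)%N ->
  Ef (fd (1 - N%:R^-1 : R)) (n.+2 + j) + Fb R N (n.+1 + j) =
  Ef (fd (1 - N%:R^-1)) n.+2 + Fb R N n.+1.
Proof.
move=> hN; elim: j => [|j IH]; first by rewrite !addn0.
rewrite addnS Ef_S -IH addnS.
have := Fb_tel R (n.+1 + j) hN.
rewrite -addSn; lra.
Qed.

Lemma binom2 (R : realType) (x : R) m : 0 <= x ->
  2 + 2 * m%:R * x + (m%:R * m%:R - m%:R) * x ^+ 2 <= 2 * (1 + x) ^+ m.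
Proof.
move=> hx; elim: m => [|m IH]; first by rewrite expr0 !(mulr0, mul0r, subr0, addr0) mulr1.
rewrite [(1 + x) ^+ m.+1]exprS -natr1.
have h1 : 0 <= (1 + x) * (2 * (1 + x) ^+ m - (2 + 2 * m%:R * x + (m%:R * m%:R - m%:R) * x ^+ 2)).
  by apply: mulr_ge0; [lra | rewrite subr_ge0].
have hm : 0 <= m%:R * m%:R - m%:R :> R.
  rewrite subr_ge0 -natrM ler_nat; case: m {IH h1} => // m; rewrite mulSn; lia.
have h2 : 0 <= (m%:R * m%:R - m%:R) * x ^+ 3 by apply: mulr_ge0 => //; apply: exprn_ge0.
rewrite !expr2 in h1 h2 *; rewrite exprS expr2 in h2.
nra.
Qed.

Lemma Fb_small (R : realType) N m : (1 < N)%N ->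
  (2 * N ^ 2 * (m * N + N ^ 2) + m <= m * m)%N -> Fb R N m <= 1.
Proof.
move=> hN hm.
have hN0 : 0 < N%:R :> R by rewrite ltr0n; lia.
have hN1 : 0 < N%:R - 1 :> R by rewrite subr_gt0 ltr1n.
set x := (N%:R - 1)^-1 : R.
set z := (N%:R)^-1 : R.
have hx0 : 0 < x by rewrite invr_gt0.
have hz0 : 0 < z by rewrite invr_gt0.
have hzx : z <= x.
  by rewrite /z /x lef_pV2 ?posrE //; lra.
have hNz : N%:R * z = 1 by rewrite /z mulfV // gt_eqF.
have hqx : (1 - z) * (1 + x) = 1.
  rewrite /x /z; field.
  by rewrite gt_eqF // gt_eqF.
have hpow : (1 - z) ^+ m * (1 + x) ^+ m = 1 by rewrite -exprMn hqx expr1n.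
have hb := binom2 m (ltW hx0).
have hmR : 2 * N%:R ^+ 2 * (m%:R * N%:R + N%:R ^+ 2) + m%:R <= m%:R * m%:R :> R.
  by move: hm; rewrite -(ler_nat R) !(natrD, natrM, natrX) !expr2.
have hpos : 0 <= 2 * N%:R ^+ 2 * (m%:R * N%:R + N%:R ^+ 2) :> R.
  by rewrite !mulr_ge0 ?addr_ge0 ?mulr_ge0 ?exprn_ge0 ?ler0n.
have hmm : 0 <= m%:R * m%:R - m%:R :> R by lra.
have hx2 : z ^+ 2 <= x ^+ 2 by rewrite lerXn2r // ?nnegrE ltW.
have h3 : (m%:R * m%:R - m%:R) * z ^+ 2 <= (m%:R * m%:R - m%:R) * x ^+ 2.
  by rewrite ler_wpM2l.
have h4 : 2 * (m%:R * N%:R + N%:R ^+ 2) <= (m%:R * m%:R - m%:R) * z ^+ 2 :> R.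
  have e : 2 * (m%:R * N%:R + N%:R ^+ 2) =
           (2 * N%:R ^+ 2 * (m%:R * N%:R + N%:R ^+ 2)) * z ^+ 2 :> R.
    by rewrite /z; field; rewrite gt_eqF.
  rewrite e ler_wpM2r ?exprn_ge0 ?(ltW hz0) //; lra.
have [hq0 _] := q_bounds R (ltnW hN).
have hqm : 0 <= (1 - z) ^+ m by rewrite exprn_ge0.
have h5 : m%:R * N%:R + N%:R ^+ 2 <= (1 + x) ^+ m.
  have : 0 <= 2 * m%:R * x :> R by apply: mulr_ge0; [apply: mulr_ge0 | apply: ltW].
  lra.
rewrite /Fb -/z; apply: le_trans (ler_wpM2l hqm h5) _.
by rewrite hpow.
Qed.

Lemma cond3 (R : realType) N n k : (1 < N)%N -> (0 < n)%N -> Fb R N n.+1 <= 1 ->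
  Ef (fd (1 - N%:R^-1 : R)) (n.+1 + n + k).+1 <=
  Ef (fd (1 - N%:R^-1)) n.+2 + Ef (fd (1 - N%:R^-1)) n.+1.
Proof.
move=> hN hn hF.
have [hq0 hq1] := q_bounds R (ltnW hN).
have -> : ((n.+1 + n + k).+1 = n.+2 + (n + k))%N by lia.
have := Ef_tel R n (n + k) (ltnW hN).
have hF0 : 0 <= Fb R N (n.+1 + (n + k)).
  by rewrite /Fb mulr_ge0 ?exprn_ge0 // addr_ge0 // ?mulr_ge0 ?exprn_ge0 ?ler0n.
have h1 : 1 <= Ef (fd (1 - N%:R^-1 : R)) n.+1.
  have e2 : Ef (fd (1 - N%:R^-1 : R)) 2 = 1.
    by rewrite /Ef !big_ord_recr big_ord0 /= /fd /= mul0r !add0r expr0 mul1r.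
  rewrite -[X in X <= _]e2; apply: Ef_mono => [e|]; [exact: fd_ge0 | lia].
lra.
Qed.

Lemma Gf_lin (R : realType) (f1 f2 : nat -> R) a c n :
  Gf (fun e => f1 e + a * f2 e) c n = Gf f1 c n + a * Gf f2 c n.
Proof.
rewrite /Gf mulr_sumr -big_split; apply: eq_bigr => u _.
by rewrite mulr_sumr -big_split.
Qed.

Lemma Gf_le (R : realType) (f1 f2 : nat -> R) c n :
  (forall e, f1 e <= f2 e) -> Gf f1 c n <= Gf f2 c n.
Proof. by move=> h; rewrite /Gf; apply: ler_sum => u _; apply: ler_sum => a _. Qed.

Lemma part3_core (R : realType) N T n k (p : 'I_N -> R) (j : 'I_N) :
  (1 < N)%N -> T = (n.+1 + n + k).+1 -> (0 < n)%N -> Fb R N n.+1 <= 1 ->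
  (forall i, 0 <= p i) -> \sum_i p i = 1 -> p j <= N%:R^-1 ->
  \sum_(i < N) Gf (fun e => (1 - N%:R^-1 : R) ^+ e) (ext (@sigma_bar N T j n.+1 k i)) T <=
  \sum_(i < N) Gf (fun e => (1 - p i) ^+ e) (ext (@sigma_bar N T j n.+1 k i)) T.
Proof.
move=> hN eT hn hF hp hs hpj.
have [hq0 hq1] := q_bounds R (ltnW hN).
set q := 1 - N%:R^-1 : R.
set c := fun i => ext (@sigma_bar N T j n.+1 k i).
have hp1 : forall i, p i <= 1.
  move=> i; rewrite -hs (bigD1 i) //= lerDl; exact: sumr_ge0.
have step : forall i, Gf (fun e => q ^+ e) (c i) T + (1 - p i - q) * Gf (fd q) (c i) T
    <= Gf (fun e => (1 - p i) ^+ e) (c i) T.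
  move=> i; rewrite -Gf_lin; apply: Gf_le => e; apply: tangent => //.
  by rewrite subr_ge0.
apply: le_trans (ler_sum _ (fun i _ => step i)).
rewrite big_split /= lerDl.
set Gt := Gf (fd q) (fun _ => true) T.
set Gc := Gf (fd q) (cbar n k) T.
have hct : forall i, i != j -> Gf (fd q) (c i) T = Gt.
  move=> i hi; apply: Gf_ext => v; apply: ext_true => u.
  by rewrite /sigma_bar (negbTE hi).
have hcj : Gf (fd q) (c j) T = Gc.
  apply: Gf_ext => v; rewrite /c /ext; case: insubP => [u hu <- | hu] /=.
    by rewrite /sigma_bar /cbar eqxx.
  rewrite /cbar (_ : (v < n.+1 + k)%N = false) ?andbF //.
  by apply/negbTE; rewrite -leqNgt; move: hu; rewrite -leqNgt eT; lia.
have hGtc : Gt <= Gc.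
  have h0 : fd q 0 = 0 by rewrite /fd mul0r.
  have h2 := Gf_Qf (fd q) (fun _ => true) T.
  have h3 := Gf_Qf (fd q) (cbar n k) T.
  rewrite h0 mulr0 !addr0 eT in h2 h3.
  have := comb3 (fun e => fd_ge0 e hq0) h0 (cond3 k hN hn hF).
  rewrite -h2 -h3 -eT -/Gt -/Gc; lra.
have hsum : \sum_(i < N) (1 - p i - q) = 0.
  have e1 : forall i, 1 - p i - q = N%:R^-1 - p i by move=> i; rewrite /q; ring.
  under eq_bigr do rewrite e1.
  rewrite sumrB hs sumr_const card_ord -[N%:R^-1 *+ N]mulr_natl mulfV ?subrr //.
  by rewrite pnatr_eq0 -lt0n; lia.
rewrite (bigD1 j) //= hcj.
rewrite (eq_bigr (fun i => (1 - p i - q) * Gt)); last by move=> i hi; rewrite hct.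
rewrite -mulr_suml.
move: hsum; rewrite (bigD1 j) //= => hsum.
have hyj : 0 <= 1 - p j - q by rewrite /q; lra.
have : 0 <= (1 - p j - q) * (Gc - Gt) by apply: mulr_ge0; lra.
move: hsum; move: (\sum_(i < N | i != j) (1 - p i - q)) => S hS h.
have -> : S = - (1 - p j - q) by lra.
lra.
Qed.

Lemma sbar_count N T n k (j : 'I_N) : T = (n.+1 + n + k).+1 ->
  (\sum_(i < N) \sum_(u < T) ~~ @sigma_bar N T j n.+1 k i u)%N = k.
Proof.
move=> eT; rewrite (bigD1 j) //= [X in (_ + X)%N]big1 ?addn0; last first.
  move=> i hi; apply: big1 => u _; by rewrite /sigma_bar (negbTE hi).
have e : forall u : 'I_T, ~~ @sigma_bar N T j n.+1 k j u = ~~ cbar n k u.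
  by move=> u; rewrite /sigma_bar /cbar eqxx.
under eq_bigr do rewrite e.
move: (fun u : nat => ~~ cbar n k u) (bl_cbar n k) => g; rewrite eT => hg.
rewrite big_ord_recr /= hg.
rewrite /cbar /=; have -> : ((n.+1 + n + k) < n.+1 + k)%N = false by apply/negbTE; lia.
by rewrite andbF addn0.
Qed.

Lemma sbar_slot N T n k (j : 'I_N) (u : 'I_T) :
  (\sum_(i < N) ~~ @sigma_bar N T j n.+1 k i u <= 1)%N.
Proof.
rewrite (bigD1 j) //= big1 ?addn0; first by case: (~~ _).
by move=> i hi; rewrite /sigma_bar (negbTE hi).
Qed.

Lemma feas_nat (R : realType) N T (alpha : R) k (sigma : 'I_N -> 'I_T -> bool) :
  alpha * T%:R = k%:R -> feasible alpha sigma ->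
  (\sum_(i < N) \sum_(u < T) ~~ sigma i u <= k)%N /\
  (forall u : 'I_T, (\sum_i ~~ sigma i u <= 1)%N).
Proof.
move=> hk [h1 h2]; split => //.
move: h1; rewrite hk.
under eq_bigr do rewrite -natr_sum.
by rewrite -natr_sum ler_nat.
Qed.

Lemma sbar_feas (R : realType) N T (alpha : R) n k (j : 'I_N) :
  T = (n.+1 + n + k).+1 -> alpha * T%:R = k%:R ->
  feasible alpha (@sigma_bar N T j n.+1 k).
Proof.
move=> eT hk; split; last by move=> u; exact: sbar_slot.
rewrite hk; under eq_bigr do rewrite -natr_sum.
by rewrite -natr_sum sbar_count.
Qed.

Lemma exists_small (R : realType) N (p : 'I_N -> R) : (0 < N)%N ->
  \sum_i p i = 1 -> exists j, p j <= N%:R^-1.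
Proof.
move=> hN hs; case: (boolP [exists i, p i <= N%:R^-1]) => [/existsP [j hj] | /existsPn h].
  by exists j.
exfalso.
have hlt : forall i, N%:R^-1 < p i by move=> i; rewrite ltNge; exact: h.
pose i0 := Ordinal hN.
have : \sum_(i < N) N%:R^-1 < \sum_(i < N) p i :> R.
  rewrite (bigD1 i0) //= [X in _ < X](bigD1 i0) //=.
  apply: ltr_leD; first exact: hlt.
  by apply: ler_sum => i _; exact: ltW.
rewrite hs sumr_const card_ord -[N%:R^-1 *+ N]mulr_natl mulfV ?ltxx //.
by rewrite pnatr_eq0 -lt0n.
Qed.

Lemma unif_sum (R : realType) N : (0 < N)%N -> \sum_(i < N) (@unif R N i) = 1.
Proof.
move=> hN; rewrite /unif sumr_const card_ord -[_ *+ N]mulr_natl mulfV //.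
by rewrite pnatr_eq0 -lt0n.
Qed.

Unset Implicit Arguments.

Theorem theorem7 (R : realType) (N : nat) (hN : (2 <= N)%N) (alpha : R)
    (ha0 : 0 < alpha) (ha1 : alpha < 1) :
  exists T0 : nat, forall (T k m : nat), (T0 <= T)%N ->
    alpha * T%:R = k%:R -> (1 - alpha) * T%:R = (2 * m)%:R ->
    forall j : 'I_N,
      let pbar : 'I_N -> R := @unif R N in
      let sbar : 'I_N -> 'I_T -> bool := @sigma_bar N T j m k in
      [/\ feasible alpha sbar,
          (forall sigma : 'I_N -> 'I_T -> bool, feasible alpha sigma ->
             payoff pbar sigma <= payoff pbar sbar)
        & (forall p : 'I_N -> R, pmf p ->
             exists2 sigma : 'I_N -> 'I_T -> bool, feasible alpha sigma &
               forall sigma' : 'I_N -> 'I_T -> bool, feasible alpha sigma' ->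
                 payoff pbar sigma' <= payoff p sigma)].
Proof.
set M := (2 * N ^ 4 + 2 * N ^ 3 + 2)%N.
have ha : 0 < 1 - alpha by lra.
have hx : 0 <= (2 * M)%:R / (1 - alpha) :> R by rewrite divr_ge0 // ltW.
exists (Num.Def.archi_bound ((2 * M)%:R / (1 - alpha))).
move=> T k m hT hk hm j pbar sbar.
have hTM : (2 * M)%:R < (1 - alpha) * T%:R.
  have h1 := archi_boundP hx.
  have h2 : (Num.Def.archi_bound ((2 * M)%:R / (1 - alpha)))%:R <= T%:R :> R by rewrite ler_nat.
  have h3 := lt_le_trans h1 h2.
  by rewrite ltr_pdivrMr // mulrC in h3.
have hmM : (M < m)%N.
  by move: hTM; rewrite hm ltr_nat; lia.
have hkm : (k + 2 * m)%N = T.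
  apply/eqP; rewrite -(eqr_nat R) natrD -hk -hm; apply/eqP; ring.
have [n em] : exists n, m = n.+1 by exists m.-1; lia.
subst m.
have eT : T = (n.+1 + n + k).+1 by lia.
have hn : (0 < n)%N by lia.
have hN0 : (0 < N)%N by lia.
have hF : Fb R N n.+1 <= 1.
  apply: Fb_small => //.
  move: hmM; rewrite /M; set x := n.+1 => hx'.
  have h1 : (x * (2 * N ^ 4 + 2 * N ^ 3 + 2) <= x * x)%N by rewrite leq_mul2l; lia.
  have h2 : (2 * N ^ 4 <= 2 * N ^ 4 * x)%N by rewrite leq_pmulr //; lia.
  nia.
have P2 : forall (j' : 'I_N) (sigma : 'I_N -> 'I_T -> bool), feasible alpha sigma ->
    payoff pbar sigma <= payoff pbar (@sigma_bar N T j' n.+1 k).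
  move=> j' sigma hf; have [htot hslot] := feas_nat hk hf.
  rewrite /pbar !payoff_eq ?unif_sum //.
  apply: ler_wpM2l; first by rewrite invr_ge0 ler0n.
  apply: ler_wpM2l; first by rewrite invr_ge0 ler0n.
  rewrite /unif; exact: (@part2_core R N T n k sigma j' hN eT htot hslot).
split.
- exact: sbar_feas.
- by move=> sigma hf; apply: P2.
move=> p [hp hs].
have [j0 hj0] := exists_small hN0 hs.
exists (@sigma_bar N T j0 n.+1 k); first exact: sbar_feas.
move=> sigma' hf'; apply: le_trans (P2 j0 sigma' hf') _.
rewrite /pbar !payoff_eq ?unif_sum //.
apply: ler_wpM2l; first by rewrite invr_ge0 ler0n.
apply: ler_wpM2l; first by rewrite invr_ge0 ler0n.
exact: (part3_core hN eT hn hF hp hs hj0).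
Qed.
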